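(* Let $c>0$, $k>1$, $\eta\in(0,\tfrac12)$, $Q\ge 0$. Consider the $2\times1$ merge network with upstream capacities $c_1=c$, $c_2=kc$, inflows $f_1=\eta c$, $f_2=k\eta c$, downstream capacity $c_0=(k+1)c$ and constant downstream queue length $Q$, with weights $\gamma_0,\gamma_1,\gamma_2>0$. For an ordered pair $(u,s)\in\{(1,2),(2,1)\}$ set $$q_{s,act}=\frac{\gamma_0}{\gamma_s}Q+\frac{\gamma_u f_u-\gamma_0 Q}{\gamma_s c_s}\,c_u,$$ and say that the R1 state $(u,s)$ can exist if $q_{s,act}\ge c_s$. Then, in regime R1: (a) the state $(u,s)=(1,2)$ can exist when: for $\gamma_0=\gamma_1=\gamma_2=1$, $Q\ge \frac{k^2-\eta}{k-1}c$; for $\gamma_i=1/c_i$ ($i=0,1,2$), $Q\ge \frac{k-\eta}{k-1}(k+1)c$; (b) the state $(u,s)=(2,1)$ can exist when: for $\gamma_0=\gamma_1=\gamma_2=1$, $Q\le \frac{k^2\eta-1}{k-1}c$; for $\gamma_i=1/c_i$ ($i=0,1,2$), $Q\le \frac{k\eta-1}{k-1}(k+1)c$.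
   Context: Model: two upstream queues merging into a downstream queue of constant length $Q$; the generalized backpressure priority of upstream queue $i$ is $p_i=(\gamma_i q_i-\gamma_0 Q)c_i$, and each upstream queue length is at least its inflow $f_i$, so its minimal priority is $p_i(f_i)$. The activation priority $p_{act}=\max_j p_j(f_j)$ is the minimal priority a queue needs to be activated, and $q_{i,act}=\frac{\gamma_0}{\gamma_i}Q+\frac{p_{act}}{\gamma_i c_i}$ is the corresponding queue length. Regime R1: one upstream queue, $u$, is unsaturated (outflow below capacity) and the other, $s$, is saturated (outflow equal to capacity $c_s$ when activated). In R1, $p_{act}=p_u(f_u)$, and queue $s$ being saturated corresponds to $q_{s,act}\ge c_s$. The weights $\gamma\equiv1$ give classical backpressure; $\gamma_i=1/c_i$ (including $\gamma_0=1/c_0$ for the downstream queue) give the re-scaled variant. *)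

(* Defs.v *)
From mathcomp Require Import all_boot all_order all_algebra.
Set Implicit Arguments. Unset Strict Implicit. Unset Printing Implicit Defensive.
Import Order.TTheory GRing.Theory Num.Theory.
Local Open Scope ring_scope.

(* 2x1 merge network: queue indices 0 (downstream), 1, 2 (upstream). *)
Section Merge.
Variable R : realFieldType.

Definition cap (c k : R) (i : nat) : R :=
  match i with 0%N => (k + 1) * c | 1%N => c | _ => k * c end.

Definition inflow (c k eta : R) (i : nat) : R :=
  match i with 2%N => k * eta * c | _ => eta * c end.

Definition classical_weights : nat -> R := fun _ => 1.
Definition rescaled_weights (c k : R) : nat -> R := fun i => (cap c k i)^-1.

Definition q_s_act (gam : nat -> R) (c k eta Q : R) (u s : nat) : R :=
  gam 0%N / gam s * Q
  + (gam u * inflow c k eta u - gam 0%N * Q) / (gam s * cap c k s) * cap c k u.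

Definition R1_can_exist (gam : nat -> R) (c k eta Q : R) (u s : nat) : Prop :=
  cap c k s <= q_s_act gam c k eta Q u s.
End Merge.

(* Main.v *)
Require Import Defs.
From mathcomp Require Import all_boot all_order all_algebra.
From mathcomp Require Import ring lra.
Import Order.TTheory GRing.Theory Num.Theory.
Local Open Scope ring_scope.

Lemma iff_scale (R : realFieldType) (a b d x y : R) :
  0 < d -> a * d = x -> b * d = y -> (a <= b <-> x <= y).
Proof. by move=> hd <- <-; rewrite ler_pM2r. Qed.

Ltac fld := field; repeat (apply/andP; split); (done || apply: oner_neq0).

Theorem proposition3 (R : realFieldType) (c k eta Q : R) :
  0 < c -> 1 < k -> 0 < eta -> eta < 1 / 2 -> 0 <= Q ->
  (* (a) state (u,s) = (1,2) *)
  ((R1_can_exist (classical_weights R) c k eta Q 1 2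
      <-> (k ^+ 2 - eta) / (k - 1) * c <= Q)
   /\ (R1_can_exist (rescaled_weights c k) c k eta Q 1 2
      <-> (k - eta) / (k - 1) * (k + 1) * c <= Q))
  /\
  (* (b) state (u,s) = (2,1) *)
  ((R1_can_exist (classical_weights R) c k eta Q 2 1
      <-> Q <= (k ^+ 2 * eta - 1) / (k - 1) * c)
   /\ (R1_can_exist (rescaled_weights c k) c k eta Q 2 1
      <-> Q <= (k * eta - 1) / (k - 1) * (k + 1) * c)).
Proof.
move=> hc hk he he2 hQ.
have hk1 : 0 < k - 1 by lra.
have hk0 : k != 0 by apply/eqP; lra.
have hk10 : k - 1 != 0 by apply/eqP; lra.
have hkp : k + 1 != 0 by apply/eqP; lra.
have hc0 : c != 0 by apply/eqP; lra.
rewrite /R1_can_exist /q_s_act /classical_weights /rescaled_weights /cap /inflow /=.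
split; split.
- rewrite (@iff_scale _ (k * c) _ k (k * k * c) (k * Q + eta * c - Q)); [|lra|fld|fld].
  rewrite (@iff_scale _ ((k ^+ 2 - eta) / (k - 1) * c) Q (k - 1) ((k ^+ 2 - eta) * c) (Q * (k - 1))) //; last fld.
  split => ?; lra.
- rewrite (@iff_scale _ (k * c) _ (k + 1) (k * c * (k + 1)) ((k - 1) * Q + eta * c * (k + 1))); [|lra|fld|fld].
  rewrite (@iff_scale _ ((k - eta) / (k - 1) * (k + 1) * c) Q (k - 1) ((k - eta) * (k + 1) * c) (Q * (k - 1))) //; last fld.
  split => ?; lra.
- rewrite (@iff_scale _ c _ 1 c (Q + k * (k * eta * c - Q))); [|lra|fld|fld].
  rewrite (@iff_scale _ Q ((k ^+ 2 * eta - 1) / (k - 1) * c) (k - 1) (Q * (k - 1)) ((k ^+ 2 * eta - 1) * c)) //; last fld.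
  split => ?; lra.
- rewrite (@iff_scale _ c _ (k + 1) (c * (k + 1)) ((1 - k) * Q + k * eta * c * (k + 1))); [|lra|fld|fld].
  rewrite (@iff_scale _ Q ((k * eta - 1) / (k - 1) * (k + 1) * c) (k - 1) (Q * (k - 1)) ((k * eta - 1) * (k + 1) * c)) //; last fld.
  split => ?; lra.
Qed.
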